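(* Fix $N\in\mathbb{N}_+$. Consider all triples $(N_1,N_2,\lambda)\in\mathbb{N}^3$ with $N_1+N_2\geq1$ such that the symmetric nested array $\mathcal{D}=\mathcal{G}\cup(\max\mathcal{G}-\mathcal{G}+\lambda)$, with $\mathcal{G}=\mathcal{G}_{\mathrm{NA}}(N_1,N_2)$, satisfies $|\mathcal{D}|=N$ and $\mathcal{D}+\mathcal{D}=\{0,\ldots,2\max\mathcal{D}\}$. Among such triples, there is one maximizing the aperture $\max\mathcal{D}$ for which $\mathcal{D}=\mathcal{D}_{\mathrm{CNA}}(N_1',N_2')$ for some $N_1',N_2'\in\mathbb{N}$.
   Context: For $a\in\mathbb{Z}$, $b\in\mathbb{N}_+$, $c\in\mathbb{Z}$, $\{a:b:c\}=\{a,a+b,\ldots\}\cap(-\infty,c]$ (empty if $c<a$), and $\{a:c\}=\{a:1:c\}$. Set sums/differences are elementwise: $\mathcal{A}+\mathcal{B}=\{a+b\}$, $\mathcal{A}+c=\{a+c\}$, $c-\mathcal{A}=\{c-a\}$. For $N_1,N_2\in\mathbb{N}$ let $\mathcal{D}_1=\{0:N_1-1\}$ and $\mathcal{D}_2=\{0:N_1+1:(N_2-1)(N_1+1)\}$. The Nested Array is $\mathcal{G}_{\mathrm{NA}}(N_1,N_2)=\mathcal{D}_1\cup(\mathcal{D}_2+N_1)$. The Concatenated Nested Array is $\mathcal{D}_{\mathrm{CNA}}(N_1,N_2)=\mathcal{D}_1\cup(\mathcal{D}_2+N_1)\cup(\mathcal{D}_1+N_2(N_1+1))$. *)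

(* Defs.v *)
(* Finite sets of integers are represented by sequences
   (seq int); set equality is membership equality (=i), cardinality is
   size (undup _). *)
From mathcomp Require Import all_boot all_order all_algebra.
Import Order.TTheory GRing.Theory Num.Theory.
Local Open Scope ring_scope.

(* {a:b:c} = {a, a+b, ...} ∩ (-oo, c]  (empty if c < a), for b >= 1.
   The candidates a + k b for k = 0..|c-a| cover all such elements. *)
Definition prog (a : int) (b : nat) (c : int) : seq int :=
  [seq x <- [seq a + (k * b)%:Z | k <- iota 0 (absz (c - a)).+1] | x <= c].

Definition rng (a c : int) : seq int := prog a 1 c.

Definition shiftS (A : seq int) (c : int) : seq int := [seq x + c | x <- A].
Definition reflS (c : int) (A : seq int) : seq int := [seq c - x | x <- A].
Definition sumS (A B : seq int) : seq int := [seq x + y | x <- A, y <- B].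
(* max A (meaningful for nonempty A) *)
Definition maxS (A : seq int) : int := foldr Num.max (head 0 A) A.
Definition cardS (A : seq int) : nat := size (undup A).

Definition D1 (N1 : nat) : seq int := rng 0 (N1%:Z - 1).
Definition D2 (N1 N2 : nat) : seq int :=
  prog 0 N1.+1 ((N2%:Z - 1) * (N1.+1)%:Z).

Definition G_NA (N1 N2 : nat) : seq int := D1 N1 ++ shiftS (D2 N1 N2) N1%:Z.

Definition D_CNA (N1 N2 : nat) : seq int :=
  G_NA N1 N2 ++ shiftS (D1 N1) (N2 * N1.+1)%:Z.

Definition symNA (N1 N2 lam : nat) : seq int :=
  let G := G_NA N1 N2 in G ++ shiftS (reflS (maxS G) G) lam%:Z.

Definition admissible (N N1 N2 lam : nat) : Prop :=
  let D := symNA N1 N2 lam in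
  [/\ (0 < N1 + N2)%N, cardS D = N & sumS D D =i rng 0 (2 * maxS D)].

(* Main.v *)
Require Import Defs.
From mathcomp Require Import all_boot all_order all_algebra.
From mathcomp Require Import zify ring lra.
Import Order.TTheory GRing.Theory Num.Theory.
Local Open Scope ring_scope.

Lemma mem_prog a b c x : (0 < b)%N ->
  (x \in prog a b c) <-> (a <= x <= c /\ exists k : nat, x = a + (k * b)%:Z).
Proof.
move=> b0; rewrite /prog mem_filter; split.
- case/andP=> xc /mapP [k _ kx]; rewrite kx /= in xc *; split; [lia | by exists k].
- case=> /andP [ax xc] [k xk]; apply/andP; split; first by [].
  apply/mapP; exists k => //; rewrite mem_iota /= add0n; nia.
Qed.

Lemma mem_rng a c x : (x \in rng a c) = (a <= x <= c).
Proof.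
apply/idP/idP.
- by case/(mem_prog _ _ _ _ (ltn0Sn 0)).
- move=> h; apply/(mem_prog _ _ _ _ (ltn0Sn 0)); split => //.
  exists (absz (x - a)); lia.
Qed.

Lemma foldr_max_ub (d : int) t x : x \in d :: t -> x <= foldr Num.max d t.
Proof.
elim: t x => [|y t IH] x /=; first by rewrite inE => /eqP ->.
rewrite !inE => /orP [/eqP ->|/orP [/eqP ->|h]].
- by rewrite le_max; apply/orP; right; exact: (IH _ (mem_head _ _)).
- by rewrite le_max lexx.
- have : x \in d :: t by rewrite inE h orbT.
  by move/IH => H; rewrite le_max; apply/orP; right; exact: H.
Qed.

Lemma foldr_max_in (d : int) t : foldr Num.max d t \in d :: t.
Proof.
elim: t => [|y t IH] /=; first by rewrite mem_head.
rewrite /Order.max; case: ifP => _.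
- move: IH; rewrite !inE => /orP [->|->] //; by rewrite !orbT.
- by rewrite !inE eqxx orbT.
Qed.

Lemma maxS_eq (A : seq int) v : v \in A -> (forall x, x \in A -> x <= v) -> maxS A = v.
Proof.
case: A => [//|a t] vin ub; rewrite /maxS /=.
have h2 : Num.max a (foldr Num.max a t) \in a :: t.
  rewrite /Order.max; case: ifP => _; last exact: mem_head.
  exact: foldr_max_in.
have h1 : v <= Num.max a (foldr Num.max a t).
  apply: (@foldr_max_ub a (a :: t) v); by rewrite inE vin orbT.
apply/eqP; rewrite eq_le h1 andbT; exact: ub.
Qed.

Lemma memG n1 n2 x : x \in G_NA n1 n2 <->
  (0 <= x < n1%:Z) \/ (exists j : nat, (0 < j <= n2)%N /\ x = (j * n1.+1)%:Z - 1).
Proof.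
rewrite /G_NA mem_cat /D1 mem_rng; split.
- case/orP => [h|]; first by left; lia.
  case/mapP => y /(mem_prog _ _ _ _ (ltn0Sn n1)) [hy [k yk]] ->; right.
  exists k.+1; split; first by nia.
  rewrite yk; lia.
- case => [h|[j [hj ->]]]; apply/orP; first by left; lia.
  right; apply/mapP; exists ((j.-1 * n1.+1)%:Z); last by (have : j = j.-1.+1 by lia); move=> {1}->; lia.
  apply/(mem_prog _ _ _ _ (ltn0Sn n1)); split; last by exists j.-1; lia.
  have: (j.-1 <= n2.-1)%N by lia.
  move=> hh; have := leq_mul hh (leqnn n1.+1); nia.
Qed.

Definition Lg (n1 n2 : nat) : int :=
  if n2 == 0%N then n1%:Z - 1 else (n2 * n1.+1)%:Z - 1.

Lemma G_range n1 n2 x : x \in G_NA n1 n2 -> 0 <= x <= Lg n1 n2.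
Proof.
rewrite /Lg; move/memG => [h|[j [hj ->]]]; case: eqP => e; try nia.
Qed.

Lemma Lg_in n1 n2 : (0 < n1 + n2)%N -> Lg n1 n2 \in G_NA n1 n2.
Proof.
move=> h; apply/memG; rewrite /Lg; case: eqP => e.
- left; lia.
- right; exists n2; split; lia.
Qed.

Lemma zero_in n1 n2 : (0 < n1 + n2)%N -> 0 \in G_NA n1 n2.
Proof.
move=> h; apply/memG; case: (posnP n1) => e.
- right; exists 1%N; rewrite e; split; lia.
- left; lia.
Qed.

Lemma maxG n1 n2 : (0 < n1 + n2)%N -> maxS (G_NA n1 n2) = Lg n1 n2.
Proof.
move=> h; apply: maxS_eq; first exact: Lg_in.
by move=> x /G_range /andP [].
Qed.

Lemma memD n1 n2 lam x : (0 < n1 + n2)%N ->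
  x \in symNA n1 n2 lam <-> x \in G_NA n1 n2 \/
     exists g, g \in G_NA n1 n2 /\ x = Lg n1 n2 - g + lam%:Z.
Proof.
move=> h; rewrite /symNA mem_cat maxG //; split.
- case/orP => [->|/mapP [y /mapP [g gin ->] ->]]; first by left.
  by right; exists g.
- case => [->//|[g [gin ->]]]; apply/orP; right.
  apply/mapP; exists (Lg n1 n2 - g) => //; apply/mapP; by exists g.
Qed.

Lemma D_range n1 n2 lam x : (0 < n1 + n2)%N ->
  x \in symNA n1 n2 lam -> 0 <= x <= Lg n1 n2 + lam%:Z.
Proof.
move=> h /(memD _ _ _ _ h) [/G_range|[g [/G_range hg ->]]]; lia.
Qed.

Lemma maxD n1 n2 lam : (0 < n1 + n2)%N ->
  maxS (symNA n1 n2 lam) = Lg n1 n2 + lam%:Z.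
Proof.
move=> h; apply: maxS_eq.
- apply/memD => //; right; exists 0; split; [exact: zero_in| lia].
- by move=> x /(D_range _ _ _ _ h) /andP [].
Qed.

Lemma D_sym n1 n2 lam x : (0 < n1 + n2)%N ->
  x \in symNA n1 n2 lam -> Lg n1 n2 + lam%:Z - x \in symNA n1 n2 lam.
Proof.
move=> h /(memD _ _ _ _ h) [hg|[g [hg ->]]]; apply/memD => //.
- right; exists x; split => //; lia.
- left; have -> : Lg n1 n2 + lam%:Z - (Lg n1 n2 - g + lam%:Z) = g by lia.
  done.
Qed.

Lemma mem_sumS (A B : seq int) x :
  x \in sumS A B <-> exists a b, [/\ a \in A, b \in B & x = a + b].
Proof.
split.
- by case/allpairsP => [[a b] [/= ha hb ->]]; exists a, b.
- by case=> a [b [ha hb ->]]; apply/allpairsP; exists (a, b).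
Qed.

Definition zr (c : int) (n : nat) : seq int := [seq c + i%:Z | i <- iota 0 n].

Lemma mem_zr c n x : (x \in zr c n) = (c <= x < c + n%:Z).
Proof.
apply/idP/idP.
- case/mapP => i; rewrite mem_iota => hi ->; lia.
- move=> h; apply/mapP; exists (absz (x - c)); [rewrite mem_iota; lia | lia].
Qed.

Lemma uniq_zr c n : uniq (zr c n).
Proof. rewrite map_inj_uniq ?iota_uniq // => i j /= h; lia. Qed.

Lemma size_zr c n : size (zr c n) = n.
Proof. by rewrite size_map size_iota. Qed.

Definition teeth (a b : nat) : seq int := [seq (j * a.+1)%:Z - 1 | j <- iota 1 b].

Lemma mem_teeth a b x : x \in teeth a b <->
  exists j : nat, (0 < j <= b)%N /\ x = (j * a.+1)%:Z - 1.
Proof.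
split.
- case/mapP => j; rewrite mem_iota => hj ->; exists j; split => //; lia.
- case=> j [hj ->]; apply/mapP; exists j => //; rewrite mem_iota; lia.
Qed.

Lemma uniq_teeth a b : uniq (teeth a b).
Proof. rewrite map_inj_uniq ?iota_uniq // => i j /= h; nia. Qed.

Lemma size_teeth a b : size (teeth a b) = b.
Proof. by rewrite size_map size_iota. Qed.

Lemma G_eq n1 n2 : G_NA n1 n2 =i zr 0 n1 ++ teeth n1 n2.
Proof.
move=> x; rewrite [x \in zr 0 n1 ++ _]mem_cat mem_zr; apply/idP/idP.
- case/memG => [h|h]; apply/orP; [left; lia| right; exact/mem_teeth].
- case/orP => h; apply/memG; [left; lia | right; exact/mem_teeth].
Qed.

Lemma uniq_catlt (s1 s2 : seq int) : uniq s1 -> uniq s2 ->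
  (forall x y, x \in s1 -> y \in s2 -> x < y) -> uniq (s1 ++ s2).
Proof.
move=> u1 u2 h; rewrite cat_uniq u1 u2 andbT /=; apply/hasPn => y ys; apply/negP => yx.
have := h _ _ yx ys; by rewrite ltxx.
Qed.

Lemma card_ge (S D : seq int) : uniq S -> {subset S <= D} -> (size S <= cardS D)%N.
Proof. move=> u sub; apply: uniq_leq_size => // x /sub; by rewrite mem_undup. Qed.

Lemma card_eq (S D : seq int) : uniq S -> S =i D -> cardS D = size S.
Proof.
move=> u e; rewrite /cardS; apply/perm_size/uniq_perm; rewrite ?undup_uniq // => x.
by rewrite mem_undup e.
Qed.

Lemma symcov n1 n2 lam : (0 < n1 + n2)%N ->
  (forall x, 0 <= x <= Lg n1 n2 + lam%:Z ->
     x \in sumS (symNA n1 n2 lam) (symNA n1 n2 lam)) ->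
  sumS (symNA n1 n2 lam) (symNA n1 n2 lam) =i rng 0 (2 * maxS (symNA n1 n2 lam)).
Proof.
move=> h cov x; rewrite maxD // mem_rng; apply/idP/idP.
- case/mem_sumS => [u [v [hu hv ->]]].
  have := D_range _ _ _ _ h hu; have := D_range _ _ _ _ h hv; lia.
- move=> hx; have [hA|hA] : x <= Lg n1 n2 + lam%:Z \/ Lg n1 n2 + lam%:Z < x by lia.
  + apply: cov; lia.
  + have hh : 0 <= 2 * (Lg n1 n2 + lam%:Z) - x <= Lg n1 n2 + lam%:Z by lia.
    case/mem_sumS: (cov _ hh) => [u [v [hu hv e]]]; apply/mem_sumS.
    exists (Lg n1 n2 + lam%:Z - u), (Lg n1 n2 + lam%:Z - v); split; try exact: D_sym; lia.
Qed.

Definition gN (N a : nat) : int := ((N - 2 * a) * a.+1)%:Z + a%:Z - 1.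

Definition Ecna (a b : nat) : seq int :=
  zr 0 a ++ teeth a b ++ zr (b * a.+1)%:Z a.

Lemma cna_eq a b : (0 < b)%N -> symNA a b a =i Ecna a b.
Proof.
move=> b0 x; have h : (0 < a + b)%N by lia.
have hL : Lg a b = (b * a.+1)%:Z - 1 by rewrite /Lg; case: eqP => //; lia.
have -> : (x \in Ecna a b) = (x \in G_NA a b) || ((b * a.+1)%:Z <= x < (b * a.+1)%:Z + a%:Z).
  by rewrite /Ecna catA mem_cat G_eq mem_zr.
apply/idP/idP.
- case/(memD _ _ _ _ h) => [->//|[g [hg ->]]]; rewrite hL.
  move: hg; rewrite G_eq mem_cat mem_zr => /orP [hg|/mem_teeth [j [hj ->]]].
  + apply/orP; right; lia.
  + apply/orP; left; apply/memG; right; exists (b - j).+1; split; first lia.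
    have -> : ((b - j).+1 * a.+1)%N = (b * a.+1 - j * a.+1 + a.+1)%N.
      rewrite mulSn addnC -mulnBl; lia.
    have := leq_mul (proj2 (andP hj)) (leqnn a.+1); lia.
- case/orP => [hx|hx]; apply/(memD _ _ _ _ h); first by left.
  right; exists ((b * a.+1)%:Z - 1 + a%:Z - x); split; last lia.
  apply/memG; left; lia.
Qed.

Lemma cnaD_eq a b : (0 < b)%N -> D_CNA a b =i Ecna a b.
Proof.
move=> b0 x; have -> : (x \in Ecna a b) = (x \in G_NA a b) || ((b * a.+1)%:Z <= x < (b * a.+1)%:Z + a%:Z).
  by rewrite /Ecna catA mem_cat G_eq mem_zr.
rewrite /D_CNA mem_cat; congr (_ || _); apply/idP/idP.
- case/mapP => y; rewrite /D1 mem_rng => hy ->; lia.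
- move=> hx; apply/mapP; exists (x - (b * a.+1)%:Z); last lia.
  rewrite /D1 mem_rng; lia.
Qed.

Lemma uniq_Ecna a b : (0 < b)%N -> uniq (Ecna a b).
Proof.
move=> b0; rewrite /Ecna; apply: uniq_catlt; rewrite ?uniq_zr //.
- apply: uniq_catlt; rewrite ?uniq_zr ?uniq_teeth //.
  move=> x y /mem_teeth [j [hj ->]]; rewrite mem_zr => hy.
  have := leq_mul (proj2 (andP hj)) (leqnn a.+1); lia.
- move=> x y; rewrite mem_zr => hx; rewrite mem_cat mem_zr => /orP [/mem_teeth [j [hj ->]]|hy].
  + have := leq_mul (proj1 (andP hj)) (leqnn a.+1); lia.
  + nia.
Qed.

Lemma cna_adm a b : (0 < b)%N ->
  [/\ admissible (2 * a + b) a b a, maxS (symNA a b a) = gN (2 * a + b) a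
    & symNA a b a =i D_CNA a b].
Proof.
move=> b0; have h : (0 < a + b)%N by lia.
have hL : Lg a b = (b * a.+1)%:Z - 1 by rewrite /Lg; case: eqP => //; lia.
split.
- split => //.
  + rewrite (@card_eq _ _ (uniq_Ecna a b b0)); last by move=> x; rewrite cna_eq.
    by rewrite /Ecna !size_cat !size_zr size_teeth; lia.
  + apply: symcov => // x; rewrite hL => hx.
    have [hs|hs] : x < a%:Z \/ a%:Z <= x by lia.
    * apply/mem_sumS; exists x, 0; split; last lia.
      -- apply/(memD _ _ _ _ h); left; apply/memG; left; lia.
      -- apply/(memD _ _ _ _ h); left; exact: zero_in.
    * pose xn := absz x; pose j := (xn.+1 %/ a.+1)%N.
      have hxn : x = xn%:Z by rewrite /xn; lia.
      have hj1 : (j * a.+1 <= xn.+1 < j.+1 * a.+1)%N by rewrite /j; lia.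
      have hj2 : (0 < j <= b)%N.
        clearbody j; apply/andP; split.
        - case: j hj1 => [|j'] hj1 //; lia.
        - case: (leqP j b) => // hb; have := leq_mul hb (leqnn a.+1); nia.
      apply/mem_sumS; exists ((j * a.+1)%:Z - 1), (x - ((j * a.+1)%:Z - 1)); split; last lia.
      -- apply/(memD _ _ _ _ h); left; apply/memG; right; exists j; split => //; lia.
      -- apply/(memD _ _ _ _ h); left; apply/memG.
         have [hl|hl] : x - ((j * a.+1)%:Z - 1) < a%:Z \/ x - ((j * a.+1)%:Z - 1) = a%:Z by lia.
         ++ left; lia.
         ++ right; exists 1%N; split; lia.
- rewrite maxD // hL /gN; lia.
- by move=> x; rewrite cna_eq // cnaD_eq.
Qed.

Lemma windows (D : seq int) (c A : int) (s : nat) : (0 < s)%N ->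
  (forall y, c < y <= A -> exists d, d \in D /\ y - s%:Z < d <= y) ->
  forall K : nat, c + (K * s)%:Z <= A ->
  exists t : seq int, [/\ uniq t, size t = K &
     forall x, x \in t -> x \in D /\ c < x <= c + (K * s)%:Z].
Proof.
move=> s0 win; elim=> [|K IH] hK.
- by exists [::]; split => // x; rewrite in_nil.
- rewrite mulSn in hK *.
  have hK' : c + (K * s)%:Z <= A by lia.
  case: (IH hK') => t [ut st ht].
  have hy : c < c + (s + K * s)%N%:Z <= A by lia.
  case: (win _ hy) => d [dD hd].
  exists (d :: t); split.
  + rewrite /= ut andbT; apply/negP => /ht [_ hx]; lia.
  + by rewrite /= st.
  + move=> x; rewrite inE => /orP [/eqP ->|/ht [xD hx]]; split => //; lia.
Qed.

Lemma Gwin_down n1 n2 y : (0 < n2)%N -> 0 <= y <= (n2 * n1.+1)%:Z - 1 ->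
  exists g, g \in G_NA n1 n2 /\ y - n1%:Z <= g <= y.
Proof.
move=> n20 hy.
have [h1|h1] : y <= n1%:Z \/ n1%:Z < y by lia.
- exists 0; split; [apply: zero_in; lia | lia].
- pose yn := absz y; pose j := (yn.+1 %/ n1.+1)%N.
  have hyn : y = yn%:Z by rewrite /yn; lia.
  have hj1 : (j * n1.+1 <= yn.+1 < j.+1 * n1.+1)%N by rewrite /j; lia.
  clearbody j.
  have hj2 : (0 < j <= n2)%N.
    apply/andP; split.
    - case: j hj1 => [|j'] hj1 //; lia.
    - case: (leqP j n2) => // hb; have := leq_mul hb (leqnn n1.+1); nia.
  exists ((j * n1.+1)%:Z - 1); split.
  + apply/memG; right; by exists j.
  + rewrite mulSn in hj1; lia.
Qed.

Lemma Gwin_up n1 n2 w : (0 < n2)%N -> 0 <= w <= (n2 * n1.+1)%:Z - 1 ->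
  exists g, g \in G_NA n1 n2 /\ w <= g <= w + n1%:Z.
Proof.
move=> n20 hw.
have [h1|h1] : w < n1%:Z \/ n1%:Z <= w by lia.
- exists w; split; [apply/memG; left; lia | lia].
- pose wn := absz w; pose j := ((wn + n1.+1) %/ n1.+1)%N.
  have hwn : w = wn%:Z by rewrite /wn; lia.
  have hj1 : (j * n1.+1 <= wn + n1.+1 < j.+1 * n1.+1)%N by rewrite /j; lia.
  clearbody j.
  have hj2 : (0 < j <= n2)%N.
    apply/andP; split.
    - case: j hj1 => [|j'] hj1 //; lia.
    - case: (leqP j n2) => // hb; have := leq_mul hb (leqnn n1.+1); nia.
  exists ((j * n1.+1)%:Z - 1); split.
  + apply/memG; right; by exists j.
  + rewrite mulSn in hj1; lia.
Qed.

Lemma upper N n1 n2 lam : admissible N n1 n2 lam ->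
  exists a, (2 * a < N)%N /\ maxS (symNA n1 n2 lam) <= gN N a.
Proof.
case=> h hc hs.
rewrite maxD //.
set A := Lg n1 n2 + lam%:Z.
have cov : forall x, 0 <= x <= 2 * A -> exists u v,
    [/\ u \in symNA n1 n2 lam, v \in symNA n1 n2 lam & x = u + v].
  move=> x hx; apply/mem_sumS; rewrite hs mem_rng maxD //.
have inD_G : forall x, x \in G_NA n1 n2 -> x \in symNA n1 n2 lam.
  by move=> x hx; apply/(memD _ _ _ _ h); left.
have Lg0 : 0 <= Lg n1 n2 by have := G_range _ _ _ (Lg_in _ _ h); lia.
have A0 : 0 <= A by rewrite /A; lia.
have [hI|hI] : (n1 == 0%N) || (n2 <= 1)%N \/ (0 < n1)%N && (1 < n2)%N by lia.
- pose m := (n1 + n2)%N.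
  have Gi : forall x, x \in G_NA n1 n2 <-> 0 <= x < m%:Z.
    move=> x; split.
    + case/memG => [hx|[j [hj ->]]]; first lia.
      case/orP: hI => [/eqP e|e].
      * rewrite /m e in hj *; lia.
      * have ej : j = 1%N by lia.
        rewrite ej /m; lia.
    + move=> hx; apply/memG.
      have [hx1|hx1] : x < n1%:Z \/ n1%:Z <= x by lia.
      * left; lia.
      * right; case/orP: hI => [/eqP e|e].
        -- exists (absz x).+1; rewrite e; split; lia.
        -- exists 1%N; split; rewrite /m in hx; lia.
  have hL : Lg n1 n2 = m%:Z - 1.
    rewrite /Lg /m; case: eqP => e; first lia.
    case/orP: hI => [/eqP e1|e1]; first (rewrite e1; lia).
    have e2 : n2 = 1%N by lia.
    rewrite e2; lia.
  have [hl|hl] : (lam <= m)%N \/ (m < lam)%N by lia.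
  + exists 0%N.
    have sub : {subset zr 0 (absz A).+1 <= symNA n1 n2 lam}.
      move=> y; rewrite mem_zr => hy; apply/(memD _ _ _ _ h).
      have [hy1|hy1] : y < m%:Z \/ m%:Z <= y by lia.
      * left; apply/Gi; lia.
      * right; exists (A - y); split.
        -- apply/Gi; rewrite /A hL in hy *; lia.
        -- rewrite /A; lia.
    have := @card_ge _ _ (uniq_zr 0 (absz A).+1) sub; rewrite size_zr hc => hN.
    split; first lia.
    rewrite /gN; lia.
  + exists 1%N.
    have sub : {subset zr 0 m ++ zr lam%:Z m <= symNA n1 n2 lam}.
      move=> y; rewrite mem_cat !mem_zr => /orP [hy|hy]; apply/(memD _ _ _ _ h).
      * left; apply/Gi; lia.
      * right; exists (A - y); split.
        -- apply/Gi; rewrite /A hL; lia.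
        -- rewrite /A; lia.
    have u : uniq (zr 0 m ++ zr lam%:Z m).
      apply: uniq_catlt; rewrite ?uniq_zr // => x y; rewrite !mem_zr; lia.
    have := @card_ge _ _ u sub; rewrite size_cat !size_zr hc => hN.
    have cls : forall z, z \in symNA n1 n2 lam -> (0 <= z < m%:Z) \/ (lam%:Z <= z <= A).
      move=> z /(memD _ _ _ _ h) [/Gi hz|[g [/Gi hg ->]]]; [left | right; rewrite /A hL]; lia.
    have hx : 0 <= 2 * m%:Z - 1 <= 2 * A by rewrite /A hL; lia.
    have [u' [v [hu hv e]]] := cov _ hx.
    have hlm : (lam <= 2 * m - 1)%N.
      case: (cls _ hu) => hu'; case: (cls _ hv) => hv'; lia.
    split; first lia.
    rewrite /A hL /gN; lia.
- case/andP: hI => hn1 hn2.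
  have n20 : (0 < n2)%N by lia.
  have hL : Lg n1 n2 = (n2 * n1.+1)%:Z - 1 by rewrite /Lg; case: eqP => //; lia.
  have hlam : lam%:Z <= Lg n1 n2 + n1.+1%:Z.
    rewrite leNgt; apply/negP => hl.
    have hx : 0 <= Lg n1 n2 + n1.+1%:Z <= 2 * A by rewrite /A; lia.
    have [u [v [hu hv e]]] := cov _ hx.
    have hu0 := D_range _ _ _ _ h hu; have hv0 := D_range _ _ _ _ h hv.
    case/(memD _ _ _ _ h): hu => [hu|[g [hg eu]]]; last by have := G_range _ _ _ hg; lia.
    case/(memD _ _ _ _ h): hv => [hv|[g [hg ev]]]; last by have := G_range _ _ _ hg; lia.
    rewrite hL in e.
    case/memG: hu => [hu|[j [hj eu]]]; case/memG: hv => [hv|[k [hk ev]]].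
    + nia.
    + have := leq_mul (proj2 (andP hk)) (leqnn n1.+1); lia.
    + have := leq_mul (proj2 (andP hj)) (leqnn n1.+1); lia.
    + have [hjk|hjk] : (j + k <= n2.+1)%N \/ (n2.+2 <= j + k)%N by lia.
      * have := leq_mul hjk (leqnn n1.+1); rewrite mulnDl; lia.
      * have := leq_mul hjk (leqnn n1.+1); rewrite mulnDl; lia.
  have low : forall y, 0 <= y <= n1%:Z -> y \in G_NA n1 n2.
    move=> y hy; apply/memG.
    have [hy1|hy1] : y < n1%:Z \/ y = n1%:Z by lia.
    + left; lia.
    + right; exists 1%N; split; lia.
  have high : forall y, A - n1%:Z <= y <= A -> y \in symNA n1 n2 lam.
    move=> y hy; have -> : y = Lg n1 n2 + lam%:Z - (A - y) by rewrite /A; lia.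
    apply: D_sym => //; apply: inD_G; apply: low; lia.
  have win : forall y, n1%:Z < y <= A ->
      exists d, d \in symNA n1 n2 lam /\ y - n1.+1%:Z < d <= y.
    move=> y hy.
    have [h1|[h1|h1]] : y <= Lg n1 n2 \/ Lg n1 n2 < y < lam%:Z \/ lam%:Z <= y by lia.
    + have hy' : 0 <= y <= (n2 * n1.+1)%:Z - 1 by rewrite -hL; lia.
      have [g [hg hg']] := Gwin_down n1 n2 y n20 hy'.
      exists g; split; [exact: inD_G | lia].
    + exists (Lg n1 n2); split; [exact: inD_G (Lg_in _ _ h) | lia].
    + have hw : 0 <= A - y <= (n2 * n1.+1)%:Z - 1 by rewrite -hL /A; lia.
      have [g [hg hg']] := Gwin_up n1 n2 (A - y) n20 hw.
      exists (Lg n1 n2 - g + lam%:Z); split.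
      * apply/(memD _ _ _ _ h); right; by exists g.
      * rewrite /A in hg'; lia.
  have [hA|hA] : A <= 2 * n1%:Z + 1 \/ 2 * n1%:Z + 2 <= A by lia.
  + exists 0%N.
    have sub : {subset zr 0 (absz A).+1 <= symNA n1 n2 lam}.
      move=> y; rewrite mem_zr => hy.
      have [hy1|hy1] : y <= n1%:Z \/ n1%:Z < y by lia.
      * apply: inD_G; apply: low; lia.
      * apply: high; lia.
    have := @card_ge _ _ (uniq_zr 0 (absz A).+1) sub; rewrite size_zr hc => hN.
    split; first lia.
    rewrite /gN; lia.
  + exists n1.
    pose P := (absz A - 2 * n1 - 1)%N; pose K := (P %/ n1.+1)%N.
    have hK : (K * n1.+1 <= P < K.+1 * n1.+1)%N by rewrite /K; lia.
    clearbody K.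
    have hK2 : n1%:Z + (K * n1.+1)%:Z <= A by rewrite /P in hK; lia.
    have [t [ut st ht]] := @windows _ _ _ _ (ltn0Sn n1) win _ hK2.
    have sub : {subset zr 0 n1.+1 ++ t ++ zr (A - n1%:Z) n1.+1 <= symNA n1 n2 lam}.
      move=> y; rewrite 2!mem_cat !mem_zr => /orP [hy|/orP [hy|hy]].
      * apply: inD_G; apply: low; lia.
      * by case: (ht _ hy).
      * apply: high; lia.
    have u : uniq (zr 0 n1.+1 ++ t ++ zr (A - n1%:Z) n1.+1).
      apply: uniq_catlt; rewrite ?uniq_zr //.
      * apply: uniq_catlt; rewrite ?uniq_zr //.
        move=> x y /ht [_ hx]; rewrite mem_zr => hy; rewrite /P in hK; lia.
      * move=> x y; rewrite mem_zr => hx; rewrite mem_cat mem_zr => /orP [/ht [_ hy]|hy]; lia.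
    have := @card_ge _ _ u sub; rewrite !size_cat !size_zr st hc => hN.
    split; first lia.
    rewrite /gN /P in hK *; nia.
Qed.

Lemma ex_max (f : nat -> int) (P : nat -> bool) n : P 0%N ->
  exists a, [/\ (a <= n)%N, P a & forall b, (b <= n)%N -> P b -> f b <= f a].
Proof.
move=> P0; elim: n => [|n [a [han Pa hmax]]].
- exists 0%N; split => // b; rewrite leqn0 => /eqP -> _; exact: lexx.
- case Pn: (P n.+1); last first.
  + exists a; split => //; first lia.
    move=> b; rewrite leq_eqVlt => /orP [/eqP ->|hb]; first by rewrite Pn.
    exact: hmax.
  + case: (boolP (f n.+1 <= f a)) => hle.
    * exists a; split => //; first lia.
      move=> b; rewrite leq_eqVlt => /orP [/eqP -> //|hb]; exact: hmax.
    * exists n.+1; split => //.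
      move=> b; rewrite leq_eqVlt => /orP [/eqP -> _|hb Pb]; first exact: lexx.
      rewrite -ltNge in hle; have := hmax b hb Pb; lia.
Qed.

Theorem mainTheorem6 (N : nat) (hN : (0 < N)%N) :
  exists N1 N2 lam : nat,
    [/\ admissible N N1 N2 lam,
        (forall M1 M2 mu : nat, admissible N M1 M2 mu ->
           maxS (symNA M1 M2 mu) <= maxS (symNA N1 N2 lam))
      & exists N1' N2' : nat, symNA N1 N2 lam =i D_CNA N1' N2'].
Proof.
have P0 : (fun a => (2 * a < N)%N) 0%N by rewrite /= muln0.
have [a [ha Pa hmax]] := @ex_max (gN N) (fun a => (2 * a < N)%N) N P0.
have b0 : (0 < N - 2 * a)%N by move: Pa => /=; lia.
have [adm mx eqc] := cna_adm a (N - 2 * a) b0.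
have e : (2 * a + (N - 2 * a))%N = N by move: Pa => /=; lia.
rewrite e in adm mx.
exists a, (N - 2 * a)%N, a; split => //.
- move=> M1 M2 mu /upper [a' [ha' hb']]; rewrite mx.
  apply: le_trans hb' _; apply: hmax => //; lia.
- by exists a, (N - 2 * a)%N.
Qed.
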